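(* Let $N\geq 2$ be an integer and $p>2$, and let $$r(N,p) = \frac{2N}{2N+(p-2)(2N-1)}.$$ For $r>0$ consider the inequality in the single variable $B\in[N^{1-p},1]$: $$1 \leq \left( 1 + (N-1)\left(\frac{N \left( \tfrac12\binom{N}{2}^{-1} \left( 1 - B^{1/(p-1)}\right) \right)^{p/2}}{B}\right)^{r}\right)^{p-1} B. \qquad ( * )$$ Then $( * )$ holds for every $B\in[N^{1-p},1]$ when $r=r(N,p)$, while for every $r>r(N,p)$ there exists $B\in[N^{1-p},1]$ for which $( * )$ fails. *)

(* Defs.v *)
From Stdlib Require Import Reals.
Open Scope R_scope.

(* Real power x^a for x >= 0 with the convention 0^a = 0 (relevant for a > 0);
   Stdlib's Rpower x a = exp (a * ln x) would give 1 at x = 0. *)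
Definition rpow (x a : R) : R := if Req_EM_T x 0 then 0 else Rpower x a.

Definition rNp (N : nat) (p : R) : R :=
  2 * INR N / (2 * INR N + (p - 2) * (2 * INR N - 1)).

Definition rhs (N : nat) (p r B : R) : R :=
  rpow (1 + (INR N - 1) *
         rpow (INR N * rpow (/ 2 * / Binomial.C N 2
                              * (1 - rpow B (/ (p - 1)))) (p / 2) / B) r)
       (p - 1) * B.

Definition ineq_holds (N : nat) (p r B : R) : Prop := 1 <= rhs N p r B.

Definition in_range (N : nat) (p B : R) : Prop := rpow (INR N) (1 - p) <= B <= 1.

(* Main.v *)
Require Import Defs.
From Stdlib Require Import Reals Lra Lia Psatz.
Open Scope R_scope.

Lemma exp_le_iff x y : exp x <= exp y <-> x <= y.
Proof.
  split; intro H.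
  - destruct (Rle_or_lt x y) as [h|h]; auto. apply exp_increasing in h; lra.
  - destruct H as [h|h]; [left; apply exp_increasing; auto | subst; lra].
Qed.

Lemma ln_le_iff x y : 0 < x -> 0 < y -> (ln x <= ln y <-> x <= y).
Proof.
  intros hx hy; split; intro H.
  - destruct (Rle_or_lt x y) as [h|h]; auto. apply ln_increasing in h; lra.
  - destruct H as [h|h]; [left; apply ln_increasing; auto | subst; lra].
Qed.

Lemma ln_le_sub1 x : 0 < x -> ln x <= x - 1.
Proof. intro hx. pose proof (exp_ineq1_le (ln x)). rewrite exp_ln in H; lra. Qed.

Lemma rpow_pos x a : 0 < x -> rpow x a = Rpower x a.
Proof. intro h. unfold rpow. destruct (Req_EM_T x 0); [lra|auto]. Qed.

Lemma Rpower_gt0 x a : 0 < Rpower x a.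
Proof. unfold Rpower; apply exp_pos. Qed.

Lemma C_N_2 N : (2 <= N)%nat -> Binomial.C N 2 = INR N * (INR N - 1) / 2.
Proof.
  intro h. destruct N as [|[|M]]; try lia.
  unfold Binomial.C. replace (S (S M) - 2)%nat with M by lia.
  simpl Factorial.fact at 2.
  replace (Factorial.fact (S (S M))) with ((S (S M)) * ((S M) * Factorial.fact M))%nat by reflexivity.
  rewrite !mult_INR. pose proof (INR_fact_neq_0 M).
  replace (INR (S (S M))) with (INR M + 2) by (rewrite !S_INR; ring).
  replace (INR (S M)) with (INR M + 1) by (rewrite !S_INR; ring).
  simpl (INR 2). field. auto.
Qed.

Lemma ln_concave k u : 0 <= k <= 1 -> 0 < u -> k * ln u <= ln (k * u + 1 - k).
Proof.
  intros hk hu. set (m := k * u + 1 - k).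
  assert (hm : 0 < m) by (unfold m; nra).
  assert (h1 : ln (u / m) <= u / m - 1) by (apply ln_le_sub1; apply Rdiv_lt_0_compat; auto).
  assert (h2 : ln (/ m) <= / m - 1) by (apply ln_le_sub1; apply Rinv_0_lt_compat; auto).
  unfold Rdiv in h1. rewrite ln_mult in h1 by (auto; apply Rinv_0_lt_compat; auto).
  rewrite ln_Rinv in h1, h2 by auto.
  assert (E : k * (u * / m - 1) + (1 - k) * (/ m - 1) = 0).
  { unfold m in *. field. lra. }
  nra.
Qed.

Lemma Rdiv_le_0_compat a b : 0 <= a -> 0 < b -> 0 <= a / b.
Proof. intros. unfold Rdiv. apply Rmult_le_pos; auto. left; apply Rinv_0_lt_compat; auto. Qed.
Lemma key N p r B : (2<=N)%nat -> 2<p -> 0<B -> Rpower B (/(p-1)) < 1 ->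
 (ineq_holds N p r B <->
  (1 - r*p/2) * ln ((1-Rpower B (/(p-1)))/(Rpower B (/(p-1))*(INR N-1)))
   <= r*(p/2-1) * ln (/(Rpower B (/(p-1))*INR N))).
Proof.
  intros hN hp hB ht1.
  assert (hn : 2 <= INR N) by (replace 2 with (INR 2) by reflexivity; apply le_INR; auto).
  unfold ineq_holds, rhs. rewrite (rpow_pos B) by auto.
  rewrite C_N_2 by auto.
  assert (lnt : ln (Rpower B (/(p-1))) = /(p-1) * ln B) by apply ln_Rpower.
  assert (ht : 0 < Rpower B (/(p-1))) by apply Rpower_gt0.
  remember (Rpower B (/(p-1))) as t eqn:Et. clear Et.
  set (n := INR N) in *.
  assert (Ex : / 2 * / (n * (n - 1) / 2) * (1 - t) = (1-t) * / n * / (n-1)) by (field; lra).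
  rewrite Ex. clear Ex.
  assert (hx : 0 < (1-t) * / n * / (n-1)).
  { apply Rmult_lt_0_compat; [apply Rmult_lt_0_compat|]; try lra; apply Rinv_0_lt_compat; lra. }
  rewrite (rpow_pos _ (p/2)) by auto.
  set (x := (1-t) * / n * / (n-1)) in *.
  assert (hy : 0 < n * Rpower x (p/2) / B).
  { apply Rdiv_lt_0_compat; auto. apply Rmult_lt_0_compat; [lra| apply Rpower_gt0]. }
  rewrite (rpow_pos _ r) by auto.
  set (y := n * Rpower x (p/2) / B) in *.
  assert (hY : 0 < Rpower y r) by apply Rpower_gt0.
  set (Y := Rpower y r) in *.
  assert (hZ : 0 < 1 + (n-1) * Y) by nra.
  rewrite rpow_pos by auto.
  set (Z := 1 + (n-1) * Y) in *.
  assert (S1 : 1 <= Rpower Z (p-1) * B <-> 1 <= Z * t).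
  { unfold Rpower. rewrite <- (exp_ln B) at 1 by auto. rewrite <- exp_plus.
    rewrite <- exp_0. rewrite exp_le_iff.
    assert (H : ln B = (p-1) * ln t) by (rewrite lnt; field; lra).
    rewrite H. rewrite !exp_0. rewrite <- (ln_le_iff 1 (Z*t)) by (try lra; nra). rewrite ln_1, ln_mult by auto.
    split; intro; nra. }
  rewrite S1.
  assert (S2 : 1 <= Z * t <-> (1-t)/(t*(n-1)) <= Y).
  { unfold Z. split; intro H.
    - apply (Rmult_le_reg_r (t*(n-1))). nra.
      unfold Rdiv. rewrite Rmult_assoc, Rinv_l by nra. nra.
    - assert (H' : (1-t)/(t*(n-1)) * (t*(n-1)) <= Y * (t*(n-1))).
      { apply Rmult_le_compat_r; auto. nra. }
      unfold Rdiv in H'. rewrite Rmult_assoc, Rinv_l in H' by nra. nra. }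
  rewrite S2.
  assert (hu : 0 < (1-t)/(t*(n-1))) by (apply Rdiv_lt_0_compat; nra).
  rewrite <- ln_le_iff by auto.
  unfold Y. rewrite ln_Rpower.
  assert (lny : ln y = ln n + (p/2) * (ln (1-t) - ln n - ln (n-1)) - ln B).
  { unfold y, x. unfold Rdiv.
    rewrite ln_mult, ln_mult, ln_Rinv, ln_Rpower by (try lra; try apply Rpower_gt0; try apply Rinv_0_lt_compat; auto;
       apply Rmult_lt_0_compat; try lra; apply Rpower_gt0).
    rewrite ln_mult, ln_mult, ln_Rinv, ln_Rinv by (try lra; try apply Rinv_0_lt_compat; try lra;
       apply Rmult_lt_0_compat; try lra; apply Rinv_0_lt_compat; lra).
    ring. }
  assert (lnu : ln ((1-t)/(t*(n-1))) = ln (1-t) - ln t - ln (n-1)).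
  { unfold Rdiv. rewrite ln_mult, ln_Rinv, ln_mult by (try lra; try nra; apply Rinv_0_lt_compat; nra). ring. }
  assert (lnv : ln (/(t*n)) = - ln t - ln n).
  { rewrite ln_Rinv, ln_mult by (try lra; nra). ring. }
  assert (lnB : ln B = (p-1) * ln t) by (rewrite lnt; field; lra).
  rewrite lny, lnu, lnv, lnB.
  split; intro H; nra.
Qed.

Lemma rpow0 a : rpow 0 a = 0.
Proof. unfold rpow. destruct (Req_EM_T 0 0); lra. Qed.

Lemma Rpower1 a : Rpower 1 a = 1.
Proof. unfold Rpower. rewrite ln_1, Rmult_0_r. apply exp_0. Qed.

Lemma holds_at_1 N p r : ineq_holds N p r 1.
Proof.
  unfold ineq_holds, rhs. rewrite (rpow_pos 1), Rpower1 by lra.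
  replace (/ 2 * / Binomial.C N 2 * (1 - 1)) with 0 by ring.
  rewrite rpow0. replace (INR N * 0 / 1) with 0 by (unfold Rdiv; ring).
  rewrite rpow0. replace (1 + (INR N - 1) * 0) with 1 by ring.
  rewrite rpow_pos, Rpower1 by lra. lra.
Qed.

Theorem mainTheorem4 (N : nat) (p : R) (hN : (2 <= N)%nat) (hp : 2 < p) :
  (forall B : R, in_range N p B -> ineq_holds N p (rNp N p) B) /\
  (forall r : R, rNp N p < r -> exists B : R, in_range N p B /\ ~ ineq_holds N p r B).
Proof.
  assert (hn : 2 <= INR N) by (replace 2 with (INR 2) by reflexivity; apply le_INR; auto).
  unfold in_range. rewrite rpow_pos by lra.
  set (n := INR N) in *. unfold rNp. fold n.
  set (D := 2 * n + (p - 2) * (2 * n - 1)).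
  assert (hD : 0 < D) by (unfold D; nra).
  assert (ED : D = 2 * n + (p - 2) * (2 * n - 1)) by reflexivity. clearbody D.
  split.
  - intros B [hlo hhi].
    assert (hB : 0 < B) by (pose proof (Rpower_gt0 n (1-p)); lra).
    destruct hhi as [hlt|heq]; [|subst; apply holds_at_1].
    assert (lnt : ln (Rpower B (/(p-1))) = /(p-1) * ln B) by apply ln_Rpower.
    assert (lnB : ln B < 0) by (rewrite <- ln_1; apply ln_increasing; auto).
    assert (ht : 0 < Rpower B (/(p-1))) by apply Rpower_gt0.
    assert (ht1 : Rpower B (/(p-1)) < 1).
    { apply ln_lt_inv; auto; try lra. rewrite lnt, ln_1.
      assert (0 < /(p-1)) by (apply Rinv_0_lt_compat; lra). nra. }
    apply key; auto.
    remember (Rpower B (/(p-1))) as t eqn:Et. clear Et. fold n.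
    set (k := (n-1)/n).
    assert (hk : 0 <= k <= 1) by (unfold k; split;
        [apply Rdiv_le_0_compat; lra | apply Rmult_le_reg_r with n; try lra; unfold Rdiv; rewrite Rmult_assoc, Rinv_l; lra]).
    assert (hu : 0 < (1-t)/(t*(n-1))) by (apply Rdiv_lt_0_compat; nra).
    pose proof (ln_concave k _ hk hu) as HC.
    replace (k * ((1 - t) / (t * (n - 1))) + 1 - k) with (/(t*n)) in HC by (unfold k; field; split; lra).
    set (lu := ln ((1 - t) / (t * (n - 1)))) in *.
    set (lv := ln (/(t*n))) in *.
    replace (1 - 2 * n / D * p / 2) with ((p-2)/D * n * k) by (unfold k; rewrite ED; field; repeat split; nra).
    replace (2 * n / D * (p / 2 - 1)) with ((p-2)/D * n) by (rewrite ED; field; repeat split; nra).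
    assert (0 < (p-2)/D * n) by (apply Rmult_lt_0_compat; [apply Rdiv_lt_0_compat|]; lra).
    rewrite Rmult_assoc. apply Rmult_le_compat_l; lra.
  - intros r hr.
    assert (hr0 : 0 < 2 * n / D) by (apply Rdiv_lt_0_compat; lra).
    set (k := (n-1)/n).
    set (a := r * (p/2 - 1)).
    set (b := 1 - r * p / 2).
    assert (hk : 0 < k < 1) by (unfold k; split;
        [apply Rdiv_lt_0_compat; lra | apply Rmult_lt_reg_r with n; try lra; unfold Rdiv; rewrite Rmult_assoc, Rinv_l; lra]).
    assert (ha : 0 < a) by (unfold a; nra).
    assert (hak : 0 < a * k) by nra.
    assert (hba : b < a * k).
    { unfold b, a, k. apply Rmult_lt_reg_r with n; try lra.
      replace (r * (p / 2 - 1) * ((n - 1) / n) * n) with (r * (p/2-1) * (n-1)) by (field; lra).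
      apply Rmult_lt_compat_r with (r:=D) in hr; auto.
      unfold Rdiv in hr. rewrite Rmult_assoc, Rinv_l in hr by lra. rewrite ED in hr. nra. }
    set (u := (1 + Rmax b 0 / (a*k)) / 2).
    assert (hm : 0 <= Rmax b 0 / (a*k) < 1).
    { split. apply Rdiv_le_0_compat; auto. apply Rmax_r.
      apply Rmult_lt_reg_r with (a*k); auto. unfold Rdiv. rewrite Rmult_assoc, Rinv_l by lra.
      unfold Rmax; destruct (Rle_dec b 0); lra. }
    assert (hu : 1/2 <= u < 1) by (unfold u; lra).
    set (t := / (1 + (n-1) * u)).
    assert (hs : 0 < 1 + (n-1)*u) by nra.
    assert (ht : 0 < t) by (apply Rinv_0_lt_compat; auto).
    assert (ht1 : t < 1).
    { unfold t. rewrite <- Rinv_1. apply Rinv_lt_contravar; nra. }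
    assert (htn : /n <= t).
    { unfold t. apply Rinv_le_contravar; nra. }
    exists (Rpower t (p-1)).
    assert (hT : Rpower (Rpower t (p-1)) (/(p-1)) = t).
    { rewrite Rpower_mult. replace ((p-1) * /(p-1)) with 1 by (field; lra). apply Rpower_1; auto. }
    split; [split|].
    + unfold Rpower. apply exp_le_iff.
      assert (ln (/n) <= ln t) by (apply ln_le_iff; auto; apply Rinv_0_lt_compat; lra).
      rewrite ln_Rinv in H by lra. nra.
    + unfold Rpower. apply Rle_trans with (exp 0); [ | rewrite exp_0; lra]. apply exp_le_iff.
      assert (ln t < 0) by (rewrite <- ln_1; apply ln_increasing; auto). nra.
    + rewrite key; auto; try apply Rpower_gt0; rewrite hT; auto.
      fold n a b.
      replace ((1 - t) / (t * (n - 1))) with u by (unfold t; field; split; lra).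
      replace (/ (t * n)) with (k * u + 1 - k) by (unfold t, k; field; split; lra).
      assert (hv : 0 < k * u + 1 - k) by nra.
      pose proof (ln_le_sub1 _ hv) as Hv.
      assert (Hlv : a * ln (k * u + 1 - k) <= - a * k * (1 - u)) by nra.
      assert (Hu : ln (/u) <= /u - 1) by (apply ln_le_sub1; apply Rinv_0_lt_compat; lra).
      rewrite ln_Rinv in Hu by lra.
      assert (lnu0 : ln u < 0) by (rewrite <- ln_1; apply ln_increasing; lra).
      destruct (Rle_dec b 0) as [hb|hb].
      * assert (b * ln u >= 0) by nra. nra.
      * assert (hmx : Rmax b 0 = b) by (apply Rmax_left; lra).
        assert (hau : b < a * k * u).
        { unfold u. rewrite hmx. 
          replace (a * k * ((1 + b / (a * k)) / 2)) with ((a*k + b)/2) by (field; lra). lra. }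
        assert (E : b * ln u >= b * (1 - /u)) by nra.
        assert (E2 : b * (1 - /u) * u = - b * (1 - u)) by (field; lra).
        assert (b * (1 - /u) > - a * k * (1 - u)).
        { apply Rmult_gt_reg_l with u; [lra|].
          replace (u * (b * (1 - / u))) with (- b * (1 - u)) by (rewrite <- E2; ring). nra. }
        lra.
Qed.
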